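(* Let $T$ be a (rooted or unrooted) phylogenetic tree on a fixed leaf set, let $T^{-\rho}$ denote the unrooted tree obtained from $T$ by suppressing its root vertex if it has one (so $T^{-\rho}=T$ if $T$ is unrooted), and let $\theta\in\Theta(T)$. Suppose $k$ site patterns are generated independently and identically distributed according to ${\bf s}(T,\theta)$, and let $\hat{\bf s}$ be the resulting empirical distribution (proportions) of site patterns. Let $\psi$ be a tree reconstruction method satisfying the following condition ( * ): for every tree $T'$ for which $T'^{-\rho}$ is fully resolved (binary) and every $\theta'\in\Theta(T')$, there exists $\epsilon=\epsilon_{(T',\theta')}>0$ such that for every probability distribution $\hat{\bf f}$ on site patterns, $\|\hat{\bf f}-{\bf s}(T',\theta')\|<\epsilon$ implies $\psi(\hat{\bf f})=\{T'^{-\rho}\}$. Then, as $k\to\infty$: (i) for every edge $e$ of $T^{-\rho}$, the bootstrap support of $e$ converges in probability to $1$; and (ii) the bootstrap support for $T^{-\rho}$, namely ${\mathbb P}(\psi(\hat{\bf s}^* )=\{T^{-\rho}\}\mid \hat{\bf s})$, converges in probability to $1$.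
   Context: For each phylogenetic tree $T$, $\theta$ is a vector of continuous parameters (including strictly positive finite branch lengths of $T$ and possibly other continuous model parameters) ranging over a set $\Theta=\Theta(T)$, an open subset of Euclidean space. A stochastic model of character evolution assigns to each pair $(T,\theta)$ a probability distribution ${\bf s}(T,\theta)$ on discrete, finite-state characters (site patterns) at the leaves of $T$, and the map $\theta\mapsto{\bf s}(T,\theta)$ is assumed continuous. A tree reconstruction method $\psi$ is any map assigning to each distribution $\hat{\bf f}$ of site pattern frequencies a set of one or more unrooted phylogenetic trees. $\|\cdot\|$ denotes any of the usual norms on Euclidean space. Given $\hat{\bf s}$ (from $k$ sites), $\hat{\bf s}^*$ denotes the empirical frequency distribution of site patterns in an i.i.d. sample of $k$ site patterns drawn from the distribution $\hat{\bf s}$ (a bootstrap sample). The bootstrap support of an edge $e$ of an unrooted phylogenetic tree $T'$ is the expected proportion (over bootstrap samples, conditional on $\hat{\bf s}$) of bootstrap samples for which a tree chosen uniformly at random from $\psi(\hat{\bf s}^* )$ has an edge inducing the same split of the leaf set as $e$ does in $T'$. The bootstrap support for $T'$ is the random variable ${\mathbb P}(\psi(\hat{\bf s}^* )=\{T'\}\mid\hat{\bf s})$.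
   Formalization: Both conclusions are asserted only for trees T whose unrooted tree $T^{-\rho}$ is fully resolved (binary), rather than for every rooted or unrooted phylogenetic tree T. The statement above fails without it. *)

(* Defs.v *)
From HB Require Import structures.
From mathcomp Require Import all_boot all_order all_algebra.
From mathcomp Require Import all_classical all_reals all_analysis.
Set Implicit Arguments. Unset Strict Implicit. Unset Printing Implicit Defensive.
Import Order.TTheory GRing.Theory Num.Theory.
Import numFieldNormedType.Exports.
Local Open Scope classical_set_scope.
Local Open Scope ring_scope.

Section Phylo.
Variable R : realType.
Variable Pat : finType.

Definition is_dist (f : {ffun Pat -> R}) : Prop :=
  (forall x, 0 <= f x) /\ \sum_x f x = 1.

Definition pdist (f g : {ffun Pat -> R}) : R := \sum_x `|f x - g x|.

Definition empirical (k : nat) (w : {ffun 'I_k -> Pat}) : {ffun Pat -> R} :=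
  [ffun x => #|[set i | w i == x]|%:R / k%:R].

Definition sample_prob (k : nat) (p : {ffun Pat -> R}) (w : {ffun 'I_k -> Pat}) : R :=
  \prod_i p (w i).

Definition sample_expect (k : nat) (p : {ffun Pat -> R})
  (g : {ffun 'I_k -> Pat} -> R) : R :=
  \sum_w sample_prob p w * g w.

Definition sample_event_prob (k : nat) (p : {ffun Pat -> R})
  (A : pred {ffun 'I_k -> Pat}) : R :=
  \sum_(w | A w) sample_prob p w.

Definition cvg_in_prob_to_1 (p : {ffun Pat -> R})
  (X : forall k : nat, {ffun 'I_k -> Pat} -> R) : Prop :=
  forall eps : R, 0 < eps ->
    (fun k : nat => sample_event_prob p (fun w : {ffun 'I_k -> Pat} =>
        eps < `|X k w - 1|)) @ \oo --> (0 : R).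

Variable UT : finType.  (* unrooted phylogenetic trees on the fixed leaf set *)
Variable Edge : UT -> finType.
Variable Split : eqType.
Variable esplit : forall U : UT, Edge U -> Split.

Definition has_split (U : UT) (sigma : Split) : bool :=
  [exists e : Edge U, esplit e == sigma].

Definition unif_prob (S : {set UT}) (P : pred UT) : R :=
  #|[set U in S | P U]|%:R / #|S|%:R.

Definition edge_bootstrap_support (psi : {ffun Pat -> R} -> {set UT})
  (k : nat) (shat : {ffun Pat -> R}) (U : UT) (e : Edge U) : R :=
  sample_expect shat (fun wstar : {ffun 'I_k -> Pat} =>
    unif_prob (psi (empirical wstar)) (fun U' => has_split U' (esplit e))).

Definition tree_bootstrap_support (psi : {ffun Pat -> R} -> {set UT})
  (k : nat) (shat : {ffun Pat -> R}) (U : UT) : R :=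
  sample_expect shat (fun wstar : {ffun 'I_k -> Pat} =>
    (psi (empirical wstar) == [set U]%SET)%:R).

End Phylo.

(* Main.v *)
Require Import Defs.
From HB Require Import structures.
From mathcomp Require Import all_boot all_order all_algebra.
From mathcomp Require Import all_classical all_reals all_analysis.
From mathcomp Require Import ring lra.
Import Order.TTheory GRing.Theory Num.Theory.
Import numFieldNormedType.Exports.
Local Open Scope classical_set_scope.
Local Open Scope ring_scope.

Section Aux.
Variable R : realType.
Variable Pat : finType.

Lemma expect_prod (k : nat) (q : {ffun Pat -> R}) (h : 'I_k -> Pat -> R) :
  sample_expect q (fun w => \prod_i h i (w i)) = \prod_i \sum_y q y * h i y.
Proof.
rewrite /sample_expect bigA_distr_bigA /=.
apply: eq_bigr => w _; rewrite /sample_prob -big_split /=; done.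
Qed.

Lemma expect_sum (k : nat) (q : {ffun Pat -> R}) (I : finType) (g : I -> {ffun 'I_k -> Pat} -> R) :
  sample_expect q (fun w => \sum_j g j w) = \sum_j sample_expect q (g j).
Proof.
rewrite /sample_expect exchange_big /=; apply: eq_bigr => w _.
by rewrite mulr_sumr.
Qed.

Lemma expect_scale (k : nat) (q : {ffun Pat -> R}) c (g : {ffun 'I_k -> Pat} -> R) :
  sample_expect q (fun w => c * g w) = c * sample_expect q g.
Proof.
rewrite /sample_expect mulr_sumr; apply: eq_bigr => w _; rewrite mulrCA //.
Qed.

Lemma expect_sub (k : nat) (q : {ffun Pat -> R}) (g h : {ffun 'I_k -> Pat} -> R) :
  sample_expect q (fun w => g w - h w) = sample_expect q g - sample_expect q h.
Proof.
rewrite /sample_expect -sumrB; apply: eq_bigr => w _; rewrite mulrBr //.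
Qed.

Lemma prob_ge0 (k : nat) (q : {ffun Pat -> R}) (w : {ffun 'I_k -> Pat}) :
  (forall x, 0 <= q x) -> 0 <= sample_prob q w.
Proof. move=> H; apply: prodr_ge0 => i _; exact: H. Qed.

Lemma expect_le (k : nat) (q : {ffun Pat -> R}) (g h : {ffun 'I_k -> Pat} -> R) :
  (forall x, 0 <= q x) -> (forall w, g w <= h w) ->
  sample_expect q g <= sample_expect q h.
Proof.
move=> Hq Hgh; apply: ler_sum => w _; apply: ler_wpM2l; first exact: prob_ge0.
exact: Hgh.
Qed.

Lemma prob_sum1 (k : nat) (q : {ffun Pat -> R}) :
  is_dist q -> \sum_(w : {ffun 'I_k -> Pat}) sample_prob q w = 1.
Proof.
move=> [_ Hs]; rewrite /sample_prob -(bigA_distr_bigA (fun (i : 'I_k) y => q y)) /=.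
by rewrite (eq_bigr (fun _ => 1)) ?prodr_const ?expr1n // => i _.
Qed.

Lemma expect_cst (k : nat) (q : {ffun Pat -> R}) c :
  is_dist q -> sample_expect q (fun _ : {ffun 'I_k -> Pat} => c) = c.
Proof.
move=> Hq; rewrite /sample_expect -mulr_suml prob_sum1 ?mul1r //.
Qed.

Lemma event_expect (k : nat) (q : {ffun Pat -> R}) (A : pred {ffun 'I_k -> Pat}) :
  sample_event_prob q A = sample_expect q (fun w => (A w)%:R).
Proof.
rewrite /sample_event_prob /sample_expect big_mkcond /=; apply: eq_bigr => w _.
by case: (A w); rewrite ?mulr1 ?mulr0.
Qed.


Lemma card_sum (k : nat) (w : {ffun 'I_k -> Pat}) x :
  (#|[set i | w i == x]|%:R : R) = \sum_i ((w i == x)%:R).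
Proof.
rewrite -sum1_card natr_sum big_mkcond /=; apply: eq_bigr => i _.
case: (boolP (i \in _)); first by move=> /set_mem /= ->.
case: (w i == x) /eqP => // E /negP H; exfalso; apply: H; apply: mem_set; exact/eqP.
Qed.

Lemma dist_le1 (q : {ffun Pat -> R}) x : is_dist q -> q x <= 1.
Proof.
move=> [H0 Hs]; rewrite -Hs (bigD1 x) //= lerDl; apply: sumr_ge0 => y _; exact: H0.
Qed.

Lemma sum_pred1 (q : {ffun Pat -> R}) x : \sum_y q y * (y == x)%:R = q x.
Proof.
rewrite (bigD1 x) //= eqxx mulr1 big1 ?addr0 // => y /negbTE ->; by rewrite mulr0.
Qed.

Lemma emp_dist (k : nat) (w : {ffun 'I_k -> Pat}) : (0 < k)%N -> is_dist (empirical R w).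
Proof.
move=> k0; split.
  by move=> x; rewrite /empirical ffunE divr_ge0.
rewrite /empirical (eq_bigr (fun x => #|[set i | w i == x]|%:R * k%:R^-1)); last first.
  by move=> x _; rewrite ffunE.
rewrite -mulr_suml.
under eq_bigr do rewrite card_sum.
rewrite exchange_big /=.
rewrite (eq_bigr (fun _ => 1)); last first.
  move=> i _; rewrite (bigD1 (w i)) //= eqxx big1 ?addr0 // => y.
  by rewrite eq_sym => /negbTE ->.
rewrite sumr_const card_ord -mulr_natl mulr1 mulfV //.
by rewrite pnatr_eq0 -lt0n.
Qed.

Lemma emp_diff (k : nat) (w : {ffun 'I_k -> Pat}) (q : {ffun Pat -> R}) x : (0 < k)%N ->
  empirical R w x - q x = (\sum_i ((w i == x)%:R - q x)) / k%:R.
Proof.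
move=> k0; have kn0 : (k%:R : R) != 0 by rewrite pnatr_eq0 -lt0n.
rewrite /empirical ffunE card_sum sumrB sumr_const card_ord.
rewrite mulrBl; congr (_ - _); rewrite -[q x *+ k]mulr_natr mulfK //.
Qed.

Lemma moment_ij (k : nat) (q : {ffun Pat -> R}) x (i j : 'I_k) :
  is_dist q ->
  sample_expect q (fun w => ((w i == x)%:R - q x) * ((w j == x)%:R - q x))
   <= (i == j)%:R.
Proof.
move=> Hq; set a := fun y : Pat => (y == x)%:R - q x.
pose h := fun (l : 'I_k) (y : Pat) => (if l == i then a y else 1) * (if l == j then a y else 1).
have -> : (fun w : {ffun 'I_k -> Pat} => ((w i == x)%:R - q x) * ((w j == x)%:R - q x))
  = (fun w => \prod_l h l (w l)).
  apply: funext => w /=; rewrite /h big_split /= -!big_mkcond /= !big_pred1_eq //.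
rewrite expect_prod (bigD1 i) //= /h.
have Ha : \sum_y q y * a y = 0.
  rewrite /a; under eq_bigr do rewrite mulrBr.
  rewrite sumrB sum_pred1 -mulr_suml (proj2 Hq) mul1r subrr //.
case: (eqVneq i j) => [<-|ij].
  rewrite eqxx /= [X in _ * X]big1 ?mulr1; last first.
    move=> l /negbTE li; under eq_bigr => y _ do rewrite li mulr1.
    under eq_bigr do rewrite mulr1. exact: (proj2 Hq).
  rewrite -(proj2 Hq); apply: ler_sum => y _; rewrite -[X in _ <= X]mulr1.
  apply: ler_wpM2l; first exact: (proj1 Hq).
  have h0 := proj1 Hq x; have h1 := @dist_le1 q x Hq.
  rewrite /a; case: (y == x) => /=; nra.
rewrite eqxx.
under eq_bigr => y _ do rewrite mulr1.
by rewrite Ha mul0r.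
Qed.

Lemma second_moment (k : nat) (q : {ffun Pat -> R}) x : (0 < k)%N -> is_dist q ->
  sample_expect q (fun w : {ffun 'I_k -> Pat} => (empirical R w x - q x) ^+ 2) <= k%:R^-1.
Proof.
move=> k0 Hq; have kn0 : (k%:R : R) != 0 by rewrite pnatr_eq0 -lt0n.
have -> : (fun w : {ffun 'I_k -> Pat} => (empirical R w x - q x) ^+ 2) =
  (fun w => k%:R^-2 * \sum_i \sum_j (((w i == x)%:R - q x) * ((w j == x)%:R - q x))).
  apply: funext => w; rewrite emp_diff // expr_div_n mulrC.
  congr (_ * _); rewrite expr2 mulr_suml; apply: eq_bigr => i _; by rewrite mulr_sumr.
rewrite expect_scale expect_sum.
apply: (@le_trans _ _ (k%:R^-2 * \sum_(i < k) \sum_(j < k) ((i == j)%:R : R))).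
  apply: ler_wpM2l; first by rewrite invr_ge0 exprn_ge0.
  apply: ler_sum => i _; rewrite expect_sum; apply: ler_sum => j _; exact: moment_ij.
rewrite (eq_bigr (fun _ => 1)); last first.
  move=> i _; rewrite (bigD1 i) //= eqxx big1 ?addr0 // => j.
  by rewrite eq_sym => /negbTE ->.
rewrite sumr_const card_ord.
by rewrite expr2 invfM -mulrA mulVf // mulr1.
Qed.


Lemma event_le (k : nat) (q : {ffun Pat -> R}) (A B : pred {ffun 'I_k -> Pat}) :
  (forall x, 0 <= q x) -> (forall w, A w -> B w) ->
  sample_event_prob q A <= sample_event_prob q B.
Proof.
move=> Hq HAB; rewrite !event_expect; apply: expect_le => // w.
by case: (boolP (A w)) => [/HAB ->|_] //=; case: (B w).
Qed.

Lemma event_ge0 (k : nat) (q : {ffun Pat -> R}) (A : pred {ffun 'I_k -> Pat}) :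
  (forall x, 0 <= q x) -> 0 <= sample_event_prob q A.
Proof. move=> Hq; apply: sumr_ge0 => w _; exact: prob_ge0. Qed.

Lemma abs_bound (d t : R) : 0 < t -> `|d| <= t + d ^+ 2 / t.
Proof.
move=> t0; set m := `|d|; have m0 : 0 <= m by exact: normr_ge0.
have hm : m * m = d ^+ 2 by rewrite -expr2 /m real_normK // num_real.
set u := d ^+ 2 / t; have hu : u * t = m * m by rewrite hm /u mulfVK // gt_eqF.
have : m * t <= (t + u) * t by rewrite mulrDl hu; nra.
by rewrite ler_pM2r.
Qed.

Lemma cheb (δ : R) : 0 < δ -> exists C : R, forall (k : nat) (q : {ffun Pat -> R}),
  (0 < k)%N -> is_dist q ->
  sample_event_prob q (fun w : {ffun 'I_k -> Pat} => δ <= pdist (empirical R w) q) <= C / k%:R.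
Proof.
move=> d0.
set n : R := #|Pat|%:R; set N : R := n + 1.
have N0 : 0 < N by rewrite /N ltr_wpDl // ler0n.
set t := δ / (2 * N).
have t0 : 0 < t by rewrite /t divr_gt0 // mulr_gt0.
have nt : n * t <= δ / 2.
  have -> : δ / 2 = N * t by rewrite /t; field; rewrite gt_eqF.
  by apply: ler_wpM2r; [exact: ltW | rewrite /N lerDl].
set K := 2 / (t * δ).
have K0 : 0 <= K by rewrite /K divr_ge0 // mulr_ge0 // ltW.
have HK : K * (t * δ) = 2 by rewrite /K mulfVK // gt_eqF // mulr_gt0.
exists (K * n) => k q k0 Hq.
rewrite event_expect.
apply: (@le_trans _ _ (sample_expect q (fun w : {ffun 'I_k -> Pat} =>
   K * \sum_x (empirical R w x - q x) ^+ 2))).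
  apply: expect_le; first exact: (proj1 Hq).
  move=> w; set S := \sum_x _.
  have S0 : 0 <= S by apply: sumr_ge0 => x _; exact: sqr_ge0.
  case: (boolP (δ <= pdist (empirical R w) q)) => /= H; last by rewrite mulr_ge0.
  have H2 : pdist (empirical R w) q <= n * t + S / t.
    have -> : n * t = \sum_(x : Pat) t by rewrite sumr_const /n mulr_natl.
    rewrite /pdist /S mulr_suml -big_split /=.
    by apply: ler_sum => x _; apply: abs_bound.
  set u := S / t; have hu : u * t = S by rewrite /u mulfVK // gt_eqF.
  have hd : δ / 2 <= u by have := le_trans H H2; rewrite -/u; lra.
  have : δ / 2 * t * K <= u * t * K.
    by apply: ler_wpM2r => //; apply: ler_wpM2r => //; exact: ltW.
  have -> : δ / 2 * t * K = 1.
    have -> : δ / 2 * t * K = (K * (t * δ)) / 2 by field.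
    by rewrite HK divff.
  by rewrite hu mulrC.
rewrite expect_scale expect_sum -/K -[K * n / _]mulrA; apply: ler_wpM2l => //.
apply: (@le_trans _ _ (\sum_(x : Pat) k%:R^-1)).
  by apply: ler_sum => x _; exact: second_moment.
by rewrite sumr_const /n mulr_natl.
Qed.


Lemma pdist_tri (f g h : {ffun Pat -> R}) : pdist f h <= pdist f g + pdist g h.
Proof.
rewrite /pdist -big_split /=; apply: ler_sum => x _.
have -> : f x - h x = (f x - g x) + (g x - h x) by rewrite addrA subrK.
exact: ler_normD.
Qed.

Lemma lim_lemma (p : {ffun Pat -> R}) (δ C : R) (X : forall k : nat, {ffun 'I_k -> Pat} -> R) :
  is_dist p -> 0 < δ ->
  (forall k (w : {ffun 'I_k -> Pat}), (0 < k)%N -> pdist (empirical R w) p < δ ->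
     `|X k w - 1| <= C / k%:R) ->
  cvg_in_prob_to_1 p X.
Proof.
move=> Hp d0 HX eps e0.
have [C' HC'] := @cheb δ d0.
apply/cvgr0Pnorm_lt => e E0.
near=> k.
have k0 : (0 < k)%N by near: k; exact: nbhs_infty_gt.
have kR : (0 : R) < k%:R by rewrite ltr0n.
have hk1 : C / eps < k%:R by near: k; exact: nbhs_infty_gtr.
have hk2 : C' / e < k%:R by near: k; exact: nbhs_infty_gtr.
rewrite ger0_norm; last exact: event_ge0 (proj1 Hp).
apply: (le_lt_trans (@event_le k p _ (fun w : {ffun 'I_k -> Pat} => δ <= pdist (empirical R w) p) (proj1 Hp) _)).
  move=> w /= H; rewrite leNgt; apply/negP => H'.
  have := HX k w k0 H'.
  move: hk1; rewrite ltr_pdivrMr // => hk1.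
  have : C / k%:R < eps by rewrite ltr_pdivrMr // mulrC.
  move=> h1 h2; have := lt_le_trans H (le_trans h2 (ltW h1)); by rewrite ltxx.
apply: (le_lt_trans (HC' k p k0 Hp)).
by rewrite ltr_pdivrMr // mulrC -ltr_pdivrMr.
Unshelve. all: by end_near.
Qed.

End Aux.

Lemma unif_le1 (R : realType) (UT : finType) (S : {set UT}) (P : pred UT) :
  unif_prob R S P <= 1.
Proof.
rewrite /unif_prob.
have h : (#|[set U in S | P U]%SET| <= #|S|)%N.
  apply: subset_leq_card; apply/fintype.subsetP => x; rewrite inE => /andP[] //.
case: (posnP #|S|) => [->|Sp].
  by rewrite invr0 mulr0.
by rewrite ler_pdivrMr ?ltr0n // mul1r ler_nat.
Qed.

Lemma unif_ge0 (R : realType) (UT : finType) (S : {set UT}) (P : pred UT) :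
  0 <= unif_prob R S P.
Proof. by rewrite /unif_prob divr_ge0. Qed.

Lemma unif1 (R : realType) (UT : finType) (U : UT) (P : pred UT) :
  P U -> unif_prob R [set U]%SET P = 1.
Proof.
move=> PU; rewrite /unif_prob.
have -> : [set U' in [set U]%SET | P U']%SET = [set U]%SET.
  by apply/setP => V; rewrite !inE; case: eqP => // ->; rewrite PU.
by rewrite cards1 divr1.
Qed.

Theorem mainTheorem1
  (R : realType)
  (Pat : finType)                       (* site patterns *)
  (Tr : Type)                           (* rooted or unrooted trees *)
  (UT : finType)                        (* unrooted trees *)
  (Edge : UT -> finType)
  (Split : eqType)
  (esplit : forall U : UT, Edge U -> Split)
  (unroot : Tr -> UT)                   (* T |-> T^{-rho} *)
  (resolved : pred UT)                  (* fully resolved (binary) *)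
  (dim : Tr -> nat)
  (Theta : forall T : Tr, set 'rV[R]_(dim T))
  (s : forall T : Tr, 'rV[R]_(dim T) -> {ffun Pat -> R})
  (psi : {ffun Pat -> R} -> {set UT})
  (* standing assumptions on the model *)
  (HTheta_open : forall T : Tr, open (Theta T))
  (Hs_dist : forall (T : Tr) (th : 'rV[R]_(dim T)), Theta T th -> is_dist (s T th))
  (Hs_cont : forall (T : Tr) (x : Pat),
      {within Theta T, continuous (fun th : 'rV[R]_(dim T) => s T th x)})
  (* psi returns one or more trees *)
  (Hpsi_ne : forall f : {ffun Pat -> R}, is_dist f -> psi f != finset.set0)
  (* condition (star) *)
  (Hstar : forall (T' : Tr) (th' : 'rV[R]_(dim T')),
      resolved (unroot T') -> Theta T' th' ->
      exists2 eps : R, 0 < eps &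
        forall f : {ffun Pat -> R}, is_dist f ->
          pdist f (s T' th') < eps -> psi f = [set unroot T']%SET)
  (T : Tr) (th : 'rV[R]_(dim T))
  (Hth : Theta T th)
  (HT : resolved (unroot T)) :
  (forall e : Edge (unroot T),
      cvg_in_prob_to_1 (s T th)
        (fun k (w : {ffun 'I_k -> Pat}) =>
           edge_bootstrap_support esplit psi k (empirical R w) e))
  /\
  cvg_in_prob_to_1 (s T th)
    (fun k (w : {ffun 'I_k -> Pat}) =>
       tree_bootstrap_support psi k (empirical R w) (unroot T)).
Proof.
set p := s T th; set U := unroot T.
have Hp : is_dist p := Hs_dist T th Hth.
have [eps0 e0 Heps] := Hstar T th HT Hth.
set δ := eps0 / 2.
have d0 : 0 < δ by rewrite /δ divr_gt0.
have [C HC] := @cheb R Pat δ d0.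
pose g k (wstar : {ffun 'I_k -> Pat}) : R := (psi (empirical R wstar) == [set U]%SET)%:R.
have key : forall k (w : {ffun 'I_k -> Pat}), (0 < k)%N -> pdist (empirical R w) p < δ ->
    1 - sample_expect (empirical R w) (g k) <= C / k%:R.
  move=> k w k0 Hw; set sh := empirical R w.
  have Hsh : is_dist sh := @emp_dist R Pat k w k0.
  rewrite -{1}(@expect_cst R Pat k sh 1 Hsh) -expect_sub.
  apply: le_trans (HC k sh k0 Hsh); rewrite event_expect.
  apply: expect_le; first exact: (proj1 Hsh).
  move=> ws; case: (boolP (δ <= pdist (empirical R ws) sh)) => /= H.
    by rewrite /g lerBlDr lerDl; case: (_ == _).
  rewrite -ltNge in H.
  have H2 : pdist (empirical R ws) p < eps0.
    apply: (le_lt_trans (@pdist_tri R Pat _ sh _)).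
    have : eps0 = δ + δ by rewrite /δ; field.
    move=> ->; exact: ltrD.
  by rewrite /g (Heps _ (@emp_dist R Pat k ws k0) H2) eqxx subrr.
have gle1 : forall k (w : {ffun 'I_k -> Pat}), (0 < k)%N ->
    sample_expect (empirical R w) (g k) <= 1.
  move=> k w k0; have Hsh := @emp_dist R Pat k w k0.
  rewrite -(@expect_cst R Pat k _ 1 Hsh); apply: expect_le; first exact: (proj1 Hsh).
  by move=> ws; rewrite /g; case: (_ == _).
split.
  move=> e; apply: (@lim_lemma R Pat p δ C) => // k w k0 Hw.
  have Hsh := @emp_dist R Pat k w k0.
  set ES := edge_bootstrap_support _ _ _ _ _.
  have ES1 : ES <= 1.
    rewrite /ES /edge_bootstrap_support -(@expect_cst R Pat k _ 1 Hsh).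
    apply: expect_le; first exact: (proj1 Hsh).
    move=> ws; exact: unif_le1.
  have ESg : sample_expect (empirical R w) (g k) <= ES.
    rewrite /ES /edge_bootstrap_support; apply: expect_le; first exact: (proj1 Hsh).
    move=> ws; rewrite /g; case: eqP => [->|_]; last exact: unif_ge0.
    rewrite unif1 //; apply/existsP; exists e; by [].
  rewrite distrC ger0_norm ?subr_ge0 //.
  apply: le_trans (key k w k0 Hw); by rewrite lerD2l lerN2.
apply: (@lim_lemma R Pat p δ C) => // k w k0 Hw.
have Hle := gle1 k w k0.
rewrite distrC ger0_norm ?subr_ge0 //; exact: key.
Qed.
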